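(* Let $\nu\ge3$ be a square-free integer with $\nu\equiv2$ or $3\pmod 4$. Define $x_0=0$, $x_{n+1}=\sqrt{\nu+x_n}$, let $P_n$ be the minimal polynomial of $x_n$ and $C_n$ its constant term. Let $p$ be a rational prime dividing $C_n$ for some $n\ge1$, and let $n(p)$ be the least positive such $n$. Then the ideal $(p,x_{n(p)})$ of $\mathbb{Z}[x_{n(p)}]$ is proper.
   Context: Square roots are the positive real ones. *)

(* Defs.v *)
From HB Require Import structures.
From mathcomp Require Import all_boot all_order all_algebra.
From mathcomp Require Import reals.
Set Implicit Arguments. Unset Strict Implicit. Unset Printing Implicit Defensive.
Import Order.TTheory GRing.Theory Num.Theory.
Local Open Scope ring_scope.

Definition squarefree (nu : nat) : Prop :=
  forall d : nat, (1 < d)%N -> ~~ (d * d %| nu)%N.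

Fixpoint xseq (R : realType) (nu : nat) (n : nat) : R :=
  match n with
  | 0%N => 0
  | n'.+1 => Num.sqrt (nu%:R + xseq R nu n')
  end.

Definition is_minpoly (R : realType) (P : {poly rat}) (x : R) : Prop :=
  [/\ P \is monic, root (map_poly ratr P) x &
      forall Q : {poly rat}, Q != 0 -> root (map_poly ratr Q) x ->
        (size P <= size Q)%N].

Definition rdvd (p : nat) (c : rat) : Prop :=
  exists z : int, c = z%:~R /\ (p%:Z %| z)%Z.

(* evaluation of an integer polynomial at x : the elements of Z[x] *)
Definition zeval (R : realType) (a : {poly int}) (x : R) : R :=
  (map_poly (fun z : int => z%:~R) a).[x].

(* Main.v *)
Require Import Defs.
From HB Require Import structures.
From mathcomp Require Import all_boot all_order all_algebra.
From mathcomp Require Import reals.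
Import Order.TTheory GRing.Theory Num.Theory.
Local Open Scope ring_scope.

Theorem lemma4p9 (R : realType) (nu : nat) (P : nat -> {poly rat})
    (p : nat) (m : nat) :
  (3 <= nu)%N -> squarefree nu -> (nu %% 4 = 2 \/ nu %% 4 = 3)%N ->
  (forall n : nat, is_minpoly (P n) (xseq R nu n)) ->
  prime p ->
  (0 < m)%N -> rdvd p (P m)`_0 ->
  (forall k : nat, (0 < k < m)%N -> ~ rdvd p (P k)`_0) ->
  ~ (exists a b : {poly int},
        1 = p%:R * zeval a (xseq R nu m) + xseq R nu m * zeval b (xseq R nu m)).
Proof.
move=> _ _ _ hmin pp _ [z [hz pz]] _ [a [b hab]].
set x := xseq R nu m in hab.
have [mon rootP minP] := hmin m.
pose Q : {poly int} := 1 - p%:R%:P * a - 'X * b.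
pose Q' : {poly rat} := map_poly intr Q.
have rootQ : root (map_poly ratr Q') x.
  rewrite /root /Q' -map_poly_comp.
  have -> : map_poly (ratr \o intr) Q = map_poly (intr : int -> R) Q.
    by apply: eq_map_poly => y /=; rewrite ratr_int.
  rewrite /Q !rmorphB /= rmorph1 !rmorphM /= map_polyC map_polyX /=.
  rewrite !hornerE /= -/(zeval a x) -/(zeval b x).
  have e : ((p%:R : int)%:~R : R) = p%:R by rewrite natz.
  by rewrite e -addrA -opprD -hab subrr.
have Pn0 : P m != 0 by apply: monic_neq0.
have dvdQ : P m %| Q'.
  have [/modp_eq0P //|hne] := eqVneq (Q' %% P m) 0.
  have := minP _ hne.
  have -> : root (map_poly ratr (Q' %% P m)) x.
    move: rootQ; rewrite /root {1}(divp_eq Q' (P m)) !rmorphD !rmorphM /= !hornerE.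
    by move/eqP: rootP => ->; rewrite mulr0 add0r.
  by move=> /(_ isT); rewrite leqNgt ltn_modp Pn0.
have [p1 [c cn0 Pe] [r Qe]] := dvdpP_rat_int dvdQ.
have hl : c * (lead_coef p1)%:~R = 1.
  by move/monicP: mon; rewrite Pe lead_coefZ lead_coef_map_inj //; apply: intr_inj.
have h0 : (p1`_0) = z * lead_coef p1.
  apply: (@intr_inj rat); rewrite rmorphM /= -hz Pe coefZ coef_map /=.
  by rewrite mulrAC hl mul1r.
have hQ0 : Q`_0 = p1`_0 * r`_0 by rewrite Qe coef0M.
have : (p%:Z %| Q`_0)%Z by rewrite hQ0 h0 -mulrA dvdz_mulr.
rewrite /Q !coefB coef1 coefCM coefXM /= subr0.
have hd : (p%:Z %| p%:R * a`_0)%Z by rewrite natz dvdz_mulr.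
rewrite rpredBr // dvdz1 /=.
by move/eqP => p1e; move: pp; rewrite p1e.
Qed.
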